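(* Let $V$ be a braided vector space of diagonal type over a field $F$ of characteristic zero with basis $x_1,\dots,x_n$ and braiding $C(x_i\otimes x_j)=p_{i,j}x_j\otimes x_i$, and let $\mathfrak B(V)$ be its Nichols algebra. (i) If there exist $i\ne j$ such that ($p_{i,j}\ne p_{j,i}^2$ or $p_{j,i}\ne p_{i,j}^2$) and $\operatorname{ord}(p_{i,i})\in\{1,\infty\}$, then $\dim\mathfrak L(V)_R=\infty$. (ii) If there exist $i\ne j$ such that ($p_{i,j}\ne1$ or $p_{j,i}\ne1$) and $\operatorname{ord}(p_{i,i})\in\{1,\infty\}$, then $\dim\mathfrak L(V)_L=\infty$.
   Context: $\mathfrak B(V)=T(V)/\bigoplus_{m\ge2}\ker S_m$, $\mathbb Z^n$-graded with $\deg x_i=e_i$; $p_{u,v}=\prod p_{i,j}^{a_ib_j}$ for $\deg u=\sum a_ie_i,\deg v=\sum b_je_j$. $\mathfrak L(V)_L$ (resp. $\mathfrak L(V)_R$) is the Lie subalgebra of $\mathfrak B(V)$ generated by $V$ under $[u,v]_L=p_{v,u}uv-p_{u,v}vu$ (resp. $[u,v]_R=p_{u,v}uv-p_{v,u}vu$). $\operatorname{ord}(q)$ is the multiplicative order of $q$ ($\infty$ if not a root of unity; $\operatorname{ord}(1)=1$). *)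

(* Defs.v *)
From HB Require Import structures.
From mathcomp Require Import all_boot all_order all_algebra all_fingroup.
Set Implicit Arguments. Unset Strict Implicit. Unset Printing Implicit Defensive.
Import Order.TTheory GRing.Theory Num.Theory.
Local Open Scope ring_scope.

Section Nichols.
Variables (F : fieldType) (n : nat) (p : 'I_n -> 'I_n -> F).

(* words in the basis letters x_1..x_n, i.e. the monomial basis of T(V) *)
Definition word := seq 'I_n.

(* elements of T(V) as formal finite sums  sum_k c_k * w_k *)
Definition tens := seq (F * word).

Definition tcoef (u : tens) (w : word) : F := \sum_(a <- u | a.2 == w) a.1.
Definition tscale (c : F) (u : tens) : tens := [seq (c * a.1, a.2) | a <- u].
Definition tmul (u v : tens) : tens := [seq (a.1 * b.1, a.2 ++ b.2) | a <- u, b <- v].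
Definition tletter (i : 'I_n) : tens := [:: (1, [:: i])].

(* Matsumoto lift T_s of s in S_m to V^{(x) m} for the diagonal braiding
   c(x_i (x) x_j) = p_{i,j} x_j (x) x_i: letter at position k moves to position
   s k, each inverted pair (k<l, s k > s l) contributes p_{w_k, w_l}. *)
Definition braid_coef (w : word) (s : 'S_(size w)) : F :=
  \prod_(k : 'I_(size w)) \prod_(l : 'I_(size w) | (k < l)%N && (s l < s k)%N)
     p (tnth (in_tuple w) k) (tnth (in_tuple w) l).
Definition perm_word (w : word) (s : 'S_(size w)) : word :=
  [seq tnth (in_tuple w) ((s^-1)%g j) | j <- enum 'I_(size w)].

(* quantum symmetrizer S = sum_m S_m, S_m = sum_{s in S_m} T_s, extended linearly *)
Definition symmetrizer (u : tens) : tens :=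
  flatten [seq [seq (a.1 * braid_coef s, perm_word s) | s <- enum 'S_(size a.2)]
          | a <- u].

(* u maps to 0 in B(V) = T(V) / (+)_{m>=2} ker S_m  (S_0, S_1 are the identity) *)
Definition zero_in_B (u : tens) : Prop := forall w, tcoef (symmetrizer u) w = 0.

Definition bichar (a b : 'I_n -> nat) : F :=
  \prod_(i < n) \prod_(j < n) p i j ^+ (a i * b j).

(* iterated brackets of generators *)
Inductive btree := BLeaf of 'I_n | BNode of btree & btree.

Fixpoint bdeg (t : btree) : 'I_n -> nat :=
  match t with
  | BLeaf i => fun j => nat_of_bool (i == j)
  | BNode l r => fun j => (bdeg l j + bdeg r j)%N
  end.

(* [u,v]_L = p_{v,u} uv - p_{u,v} vu *)
Fixpoint evalL (t : btree) : tens :=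
  match t with
  | BLeaf i => tletter i
  | BNode l r =>
      tscale (bichar (bdeg r) (bdeg l)) (tmul (evalL l) (evalL r)) ++
      tscale (- bichar (bdeg l) (bdeg r)) (tmul (evalL r) (evalL l))
  end.

(* [u,v]_R = p_{u,v} uv - p_{v,u} vu *)
Fixpoint evalR (t : btree) : tens :=
  match t with
  | BLeaf i => tletter i
  | BNode l r =>
      tscale (bichar (bdeg l) (bdeg r)) (tmul (evalR l) (evalR r)) ++
      tscale (- bichar (bdeg r) (bdeg l)) (tmul (evalR r) (evalR l))
  end.

(* The Lie subalgebra generated by V is the span (in B(V)) of the values of all
   iterated brackets; it is infinite-dimensional iff for every N it contains N
   elements that are linearly independent in B(V). *)
Definition infinite_dim_span (ev : btree -> tens) : Prop :=
  forall N : nat, exists ts : N.-tuple btree,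
    forall c : 'I_N -> F,
      zero_in_B (flatten [seq tscale (c k) (ev (tnth ts k)) | k <- enum 'I_N]) ->
      forall k, c k = 0.

End Nichols.

Definition root_of_unity (F : fieldType) (q : F) : Prop :=
  exists k : nat, (0 < k)%N /\ q ^+ k = 1.

Definition ord_1_or_inf (F : fieldType) (q : F) : Prop :=
  q = 1 \/ ~ root_of_unity q.

(* Main.v *)
Require Import Defs.
From HB Require Import structures.
From mathcomp Require Import all_boot all_order all_algebra all_fingroup.
From mathcomp Require Import zify ring.
Import Order.TTheory GRing.Theory Num.Theory.
Local Open Scope ring_scope.

Set Implicit Arguments. Unset Strict Implicit. Unset Printing Implicit Defensive.


Lemma sum_lift_perm (R : nmodType) m (i0 j0 : 'I_m.+1) (P : pred 'S_m.+1) (G : 'S_m.+1 -> R) :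
  \sum_(s : 'S_m.+1 | (s i0 == j0) && P s) G s =
  \sum_(t : 'S_m | P (lift_perm i0 j0 t)) G (lift_perm i0 j0 t).
Proof.
rewrite (reindex (lift_perm i0 j0)); last first.
  pose ulsf i (s : 'S_m.+1) k := odflt k (unlift (s i) (s (lift i k))).
  have ulsfK i (s : 'S_m.+1) k: lift (s i) (ulsf i s k) = s (lift i k).
    rewrite /ulsf; have:= neq_lift i k.
    by rewrite -(can_eq (permK s)) => /unlift_some[] ? ? ->.
  have inj_ulsf: injective (ulsf i0 _).
    move=> s; apply: can_inj (ulsf (s i0) s^-1%g) _ => k'.
    by rewrite {1}/ulsf ulsfK !permK liftK.
  exists (fun s => perm (inj_ulsf s)) => [s _ | s].
    by apply/permP=> k'; rewrite permE /ulsf lift_perm_lift lift_perm_id liftK.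
  move/andP=> [/(s _ =P _) si0 _]; apply/permP=> k.
  case: (unliftP i0 k) => [k'|] ->; rewrite ?lift_perm_id //.
  by rewrite lift_perm_lift -si0 permE ulsfK.
by apply: eq_bigl => t; rewrite lift_perm_id eqxx.
Qed.

Lemma lift_ltn m (r : 'I_m.+1) (k l : 'I_m) : (lift r k < lift r l)%N = (k < l)%N.
Proof. rewrite /= /bump; case: (leqP r k); case: (leqP r l); lia. Qed.

Lemma lift_ltr m (r : 'I_m.+1) (k : 'I_m) : (lift r k < r)%N = (k < r)%N.
Proof. rewrite /= /bump; case: (leqP r k); lia. Qed.

Lemma big_split_lift (R : Type) (idx : R) (op : Monoid.com_law idx) m (r : 'I_m.+1)
   (P : pred 'I_m.+1) (G : 'I_m.+1 -> R) :
  \big[op/idx]_(k | P k) G k =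
  op (if P r then G r else idx) (\big[op/idx]_(k : 'I_m | P (lift r k)) G (lift r k)).
Proof.
rewrite big_mkcond (bigD1_ord r) //=; congr (op _ _).
by rewrite [RHS]big_mkcond.
Qed.


Section K.
Variables (F : fieldType) (n : nat) (p : 'I_n -> 'I_n -> F).

Definition bc m (f : 'I_m -> 'I_n) (s : 'S_m) : F :=
  \prod_(k : 'I_m) \prod_(l : 'I_m | (k < l)%N && (s l < s k)%N) p (f k) (f l).
Definition pw m (f : 'I_m -> 'I_n) (s : 'S_m) : seq 'I_n :=
  [seq f ((s^-1)%g j) | j <- enum 'I_m].
Definition Kf m (f : 'I_m -> 'I_n) (y : seq 'I_n) : F :=
  \sum_(s : 'S_m | pw f s == y) bc f s.

Lemma bump_ltn h k l : (bump h k < bump h l)%N = (k < l)%N.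
Proof. rewrite /bump; case: (leqP h k); case: (leqP h l); lia. Qed.

Lemma Kf_rec m (f : 'I_m -> 'I_n) z y :
  Kf f (z :: y) = \sum_(r : 'I_m | f r == z)
     (\prod_(k : 'I_m.-1 | (k < r)%N) p (f (lift r k)) (f r)) * Kf (f \o lift r) y.
Proof.
case: m f => [|m] f.
  by rewrite big_ord0 /Kf big1 // => s; rewrite /pw enum_ord0.
rewrite /Kf (partition_big (fun s : 'S_m.+1 => (s^-1)%g ord0) predT) //=.
rewrite [RHS]big_mkcond /=; apply: eq_bigr => r _.
rewrite (eq_bigl (fun s : 'S_m.+1 => (s r == ord0) && (pw f s == z :: y))); last first.
  move=> s; rewrite andbC; congr (_ && _).
  by rewrite -(inj_eq (@perm_inj _ s)) permKV eq_sym.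
rewrite sum_lift_perm.
have Hpw t : pw f (lift_perm r ord0 t) = f r :: pw (f \o lift r) t.
  rewrite /pw enum_ordSl /= lift_permV lift_perm_id -map_comp; congr (_ :: _).
  by apply: eq_map => k /=; rewrite lift_perm_lift.
have Hbc t : bc f (lift_perm r ord0 t) =
    (\prod_(k : 'I_m | (k < r)%N) p (f (lift r k)) (f r)) * bc (f \o lift r) t.
  rewrite /bc (big_split_lift _ r) /= big1 ?mul1r; last first.
    by move=> l /andP[_]; rewrite lift_perm_id.
  rewrite [X in X * _]big_mkcond -big_split /=; apply: eq_bigr => k _.
  rewrite (big_split_lift _ r) lift_perm_id lift_perm_lift /= lift_ltr.
  congr (_ * _); last first.
    by apply: eq_bigl => l; rewrite lift_perm_lift /= !bump_ltn.
  by case: (k < r)%N.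
case: (eqVneq (f r) z) => [<-|fz].
  rewrite mulr_sumr; apply: eq_big => t; first by rewrite Hpw eqseq_cons eqxx.
  by move=> _; rewrite Hbc.
by rewrite big1 // => t; rewrite Hpw eqseq_cons (negbTE fz).
Qed.

Lemma lift_gtr m (r : 'I_m.+1) (k : 'I_m) : (r < lift r k)%N = (r <= k)%N.
Proof. rewrite /= /bump; case: (leqP r k); lia. Qed.

Lemma bump_gt h l : (h < bump h l)%N = (h <= l)%N.
Proof. rewrite /bump; case: (leqP h l); lia. Qed.
Lemma lift_max_lt m (x : 'I_m) : (lift ord_max x < @ord_max m)%N.
Proof. rewrite /= /bump; have := ltn_ord x; lia. Qed.
Lemma lift_max_gtF m (x : 'I_m) : (@ord_max m < lift ord_max x)%N = false.
Proof. by apply/negbTE; rewrite -leqNgt ltnW // lift_max_lt. Qed.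

Lemma Kf_recr m (f : 'I_m -> 'I_n) z y :
  Kf f (rcons y z) = \sum_(r : 'I_m | f r == z)
     (\prod_(l : 'I_m.-1 | (r <= l)%N) p (f r) (f (lift r l))) * Kf (f \o lift r) y.
Proof.
case: m f => [|m] f.
  by rewrite big_ord0 /Kf big1 // => s; rewrite /pw enum_ord0; case: y.
rewrite /Kf (partition_big (fun s : 'S_m.+1 => (s^-1)%g ord_max) predT) //=.
rewrite [RHS]big_mkcond /=; apply: eq_bigr => r _.
rewrite (eq_bigl (fun s : 'S_m.+1 => (s r == ord_max) && (pw f s == rcons y z))); last first.
  move=> s; rewrite andbC; congr (_ && _).
  by rewrite -(inj_eq (@perm_inj _ s)) permKV eq_sym.
rewrite sum_lift_perm.
have Hpw t : pw f (lift_perm r ord_max t) = rcons (pw (f \o lift r) t) (f r).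
  rewrite /pw enum_ordSr map_rcons lift_permV lift_perm_id -map_comp; congr (rcons _ _).
  apply: eq_map => k /=.
  have -> : widen_ord (leqnSn m) k = lift ord_max k by apply: val_inj; rewrite /= /bump leqNgt ltn_ord.
  by rewrite lift_perm_lift.
have Hbc t : bc f (lift_perm r ord_max t) =
    (\prod_(l : 'I_m | (r <= l)%N) p (f r) (f (lift r l))) * bc (f \o lift r) t.
  rewrite /bc (big_split_lift _ r) /=; congr (_ * _).
    rewrite (big_split_lift _ r) ltnn /= mul1r; apply: eq_bigl => l.
    by rewrite bump_gt lift_perm_id lift_perm_lift lift_max_lt andbT.
  apply: eq_bigr => k _.
  rewrite (big_split_lift _ r) lift_perm_id lift_perm_lift.
  rewrite lift_max_gtF andbF /= mul1r.
  by apply: eq_bigl => l; rewrite lift_perm_lift /= !bump_ltn.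
case: (eqVneq (f r) z) => [<-|fz].
  rewrite mulr_sumr; apply: eq_big => t.
    by rewrite Hpw eqseq_rcons eqxx andbT.
  by move=> _; rewrite Hbc.
by rewrite big1 // => t; rewrite Hpw eqseq_rcons (negbTE fz) andbF.
Qed.
End K.


Lemma prod_ltr (R : comRingType) m r (x : R) : (r <= m)%N ->
  \prod_(k < m | (k < r)%N) x = x ^+ r.
Proof.
move=> hr; rewrite big_mkcond -(big_mkord xpredT (fun k => if (k < r)%N then x else 1)).
rewrite (@big_cat_nat _ _ _ r 0 m _ _ (leq0n r) hr) /=.
rewrite (eq_big_nat _ _ (F2 := fun _ => x)); last by move=> k /andP[_ ->].
rewrite [X in _ * X](eq_big_nat _ _ (F2 := fun _ => 1)); last first.
  by move=> k /andP[hk _]; rewrite ltnNge hk.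
by rewrite !prodr_const_nat expr1n mulr1 subn0.
Qed.

Lemma prod_ger (R : comRingType) m r (x : R) : (r <= m)%N ->
  \prod_(k < m | (r <= k)%N) x = x ^+ (m - r).
Proof.
move=> hr; rewrite big_mkcond -(big_mkord xpredT (fun k => if (r <= k)%N then x else 1)).
rewrite (@big_cat_nat _ _ _ r 0 m _ _ (leq0n r) hr) /=.
rewrite (eq_big_nat _ _ (F2 := fun _ => 1)); last first.
  by move=> k /andP[_ hk]; rewrite leqNgt hk.
rewrite [X in _ * X](eq_big_nat _ _ (F2 := fun _ => x)); last by move=> k /andP[-> _].
by rewrite !prodr_const_nat expr1n mul1r.
Qed.

Section C.
Variables (F : fieldType) (n : nat) (p : 'I_n -> 'I_n -> F).

Definition Gq (q : F) m := \prod_(k < m) \sum_(r < k.+1) q ^+ r.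

Lemma eq_Kf m (f g : 'I_m -> 'I_n) y : f =1 g -> Kf p f y = Kf p g y.
Proof.
move=> fg; rewrite /Kf /pw /bc; apply: eq_big => s.
  by rewrite (eq_map (fun j => fg _)).
by move=> _; apply: eq_bigr => k _; apply: eq_bigr => l _; rewrite !fg.
Qed.

Lemma Kf_const i m : Kf p (fun _ : 'I_m => i) (nseq m i) = Gq (p i i) m.
Proof.
elim: m => [|m IH].
  rewrite /Kf /Gq big_ord0 (eq_bigl xpredT); last by move=> s; rewrite /pw enum_ord0.
  rewrite (eq_bigr (fun _ => 1)); last by move=> s _; rewrite /bc big_ord0.
  by rewrite sumr_const card_Sn.
change (nseq m.+1 i) with (i :: nseq m i).
rewrite Kf_rec (eq_bigl xpredT); last by move=> r; rewrite eqxx.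
have -> : Gq (p i i) m.+1 = Gq (p i i) m * \sum_(r < m.+1) p i i ^+ r.
  by rewrite /Gq big_ord_recr.
rewrite mulr_sumr; apply: eq_bigr => r _.
have hr : (r <= m)%N by rewrite -ltnS.
rewrite prod_ltr // mulrC; congr (_ * _).
exact: IH.
Qed.
Definition shw (i j : 'I_n) a b : seq 'I_n := nseq a i ++ j :: nseq b i.

Lemma size_shw i j a b : size (shw i j a b) = (a + b).+1.
Proof. by rewrite /shw size_cat /= !size_nseq addnS. Qed.

Lemma nth_shw i j a b k : nth i (shw i j a b) k = if k == a then j else i.
Proof.
rewrite /shw nth_cat size_nseq; case: ltnP => hk.
  rewrite nth_nseq hk; case: (eqVneq k a) => [e|//].
  by subst; rewrite ltnn in hk.
case: (eqVneq k a) => e; first by subst; rewrite subnn.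
have -> : (k - a = (k - a - 1).+1)%N by lia.
by rewrite /= nth_nseq if_same.
Qed.

End C.


Section D.
Variables (F : fieldType) (n : nat) (p : 'I_n -> 'I_n -> F).

Lemma bump_neq (h k : nat) : (bump h k == h) = false.
Proof. rewrite /bump; case: (leqP h k) => /= hk; apply/negbTE; lia. Qed.

Lemma tail_const i j a b (r : 'I_(size (shw i j a b))) : val r = a ->
  Kf p (tnth (in_tuple (shw i j a b)) \o lift r) (nseq (a + b) i) = Gq (p i i) (a + b).
Proof.
move=> hr.
have E : (size (shw i j a b)).-1 = (a + b)%N by rewrite size_shw.
transitivity (Kf p (fun _ : 'I_(size (shw i j a b)).-1 => i) (nseq (size (shw i j a b)).-1 i)).
  have -> : nseq (size (shw i j a b)).-1 i = nseq (a + b) i by rewrite E.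
  apply: eq_Kf => k /=.
  rewrite (tnth_nth i) nth_shw /=.
  by have := bump_neq r k; rewrite hr => ->.
by rewrite Kf_const E.
Qed.

Lemma Kw_first i j a b : i != j ->
  Kf p (tnth (in_tuple (shw i j a b))) (j :: nseq (a + b) i) = p i j ^+ a * Gq (p i i) (a + b).
Proof.
move=> ij; rewrite Kf_rec.
have ha : (a < size (shw i j a b))%N by rewrite size_shw; lia.
rewrite (big_pred1 (Ordinal ha)); last first.
  move=> r; rewrite (tnth_nth i) /= nth_shw.
  have -> : (r == Ordinal ha) = (val r == a) by [].
  by case: (eqVneq (val r) a) => _; rewrite ?eqxx //; apply/eqP => e; rewrite e eqxx in ij.
congr (_ * _); last exact: (@tail_const i j a b (Ordinal ha) erefl).
rewrite (eq_bigr (fun _ => p i j)); last first.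
  move=> k _; rewrite !(tnth_nth i) !nth_shw /= eqxx bump_neq //.
have hs : (a <= (size (shw i j a b)).-1)%N by rewrite size_shw leq_addr.
by rewrite (@prod_ltr _ _ a).
Qed.

Lemma Kw_last i j a b : i != j ->
  Kf p (tnth (in_tuple (shw i j a b))) (rcons (nseq (a + b) i) j) = p j i ^+ b * Gq (p i i) (a + b).
Proof.
move=> ij; rewrite Kf_recr.
have ha : (a < size (shw i j a b))%N by rewrite size_shw; lia.
rewrite (big_pred1 (Ordinal ha)); last first.
  move=> r; rewrite (tnth_nth i) /= nth_shw.
  have -> : (r == Ordinal ha) = (val r == a) by [].
  by case: (eqVneq (val r) a) => _; rewrite ?eqxx //; apply/eqP => e; rewrite e eqxx in ij.
congr (_ * _); last exact: (@tail_const i j a b (Ordinal ha) erefl).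
rewrite (eq_bigr (fun _ => p j i)); last first.
  move=> k _; rewrite !(tnth_nth i) !nth_shw /= eqxx bump_neq //.
have hs : (a <= (size (shw i j a b)).-1)%N by rewrite size_shw leq_addr.
rewrite (@prod_ger _ _ a) //; congr (_ ^+ _).
have -> : (size (shw i j a b)).-1 = (a + b)%N by rewrite size_shw.
by rewrite addKn.
Qed.

End D.


Section E.
Variables (F : fieldType) (n : nat) (p : 'I_n -> 'I_n -> F).

Definition phi (y : seq 'I_n) (u : tens F n) : F :=
  \sum_(a <- u) a.1 * Kf p (tnth (in_tuple a.2)) y.

Lemma tcoef_sym u y : tcoef (symmetrizer p u) y = phi y u.
Proof.
rewrite /tcoef /symmetrizer /phi big_flatten big_map /=; apply: eq_bigr => a _.
rewrite big_map big_enum_cond /= /Kf mulr_sumr; apply: eq_bigl => s.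
by [].
Qed.

Lemma phi_cat y u v : phi y (u ++ v) = phi y u + phi y v.
Proof. by rewrite /phi big_cat. Qed.

Lemma phi_scale y c u : phi y (tscale c u) = c * phi y u.
Proof. by rewrite /phi /tscale big_map mulr_sumr; apply: eq_bigr => a _; rewrite mulrA. Qed.

Lemma Kf_size m (f : 'I_m -> 'I_n) y : size y != m -> Kf p f y = 0.
Proof.
move=> hy; rewrite /Kf big_pred0 // => s; apply/negbTE; apply: contra hy => /eqP <-.
by rewrite /pw size_map size_enum_ord.
Qed.


Variables (i j : 'I_n).

Fixpoint tr m : btree n :=
  match m with 0 => BLeaf j | m'.+1 => BNode (BLeaf i) (tr m') end.

Lemma bdeg_tr m k : bdeg (tr m) k = (m * (i == k) + (j == k))%N.
Proof. by elim: m => [|m IH] //=; rewrite IH mulSn addnA. Qed.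

Lemma prod_ind (x : 'I_n -> F) c : \prod_(b < n) x b ^+ (c * (i == b))%N = x i ^+ c.
Proof.
rewrite (bigD1 i) //= eqxx muln1 big1 ?mulr1 // => b hb.
by rewrite eq_sym (negbTE hb) muln0 expr0.
Qed.

Lemma prod_ind1 (x : 'I_n -> F) : \prod_(b < n) x b ^+ (j == b) = x j.
Proof.
rewrite (bigD1 j) //= eqxx expr1 big1 ?mulr1 // => b hb.
by rewrite eq_sym (negbTE hb) expr0.
Qed.

Lemma bichar_l m : bichar p (bdeg (BLeaf i)) (bdeg (tr m)) = p i i ^+ m * p i j.
Proof.
rewrite /bichar (bigD1 i) //= [X in _ * X]big1 ?mulr1; last first.
  by move=> a ha; apply: big1 => b _; rewrite eq_sym (negbTE ha) mul0n expr0.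
rewrite eqxx (eq_bigr (fun b => p i b ^+ (m * (i == b)) * p i b ^+ (j == b))).
  by rewrite big_split /= prod_ind prod_ind1.
by move=> b _; rewrite bdeg_tr mul1n exprD.
Qed.

Lemma bichar_r m : bichar p (bdeg (tr m)) (bdeg (BLeaf i)) = p i i ^+ m * p j i.
Proof.
rewrite /bichar /=.
rewrite (eq_bigr (fun a => p a i ^+ (m * (i == a)) * p a i ^+ (j == a))).
  by rewrite big_split /= prod_ind prod_ind1.
move=> a _; rewrite (bigD1 i) //= [X in _ * X]big1 ?mulr1; last first.
  by move=> b hb; rewrite eq_sym (negbTE hb) muln0 expr0.
by rewrite eqxx muln1 bdeg_tr exprD.
Qed.


Hypothesis ij : i != j.

Definition shape m (u : tens F n) :=
  forall a, a \in u -> exists2 k, (k <= m)%N & a.2 = shw i j k (m - k).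

Definition Psi1 (u : tens F n) : F := \sum_(a <- u) a.1 * p i j ^+ index j a.2.
Definition Psi2 (u : tens F n) : F :=
  \sum_(a <- u) a.1 * p j i ^+ (size a.2 - (index j a.2).+1).

Lemma index_shw k l : index j (shw i j k l) = k.
Proof.
elim: k => [|k IH] /=; first by rewrite /shw /= eqxx.
by rewrite /shw /= (negbTE ij) -/(shw i j k l) IH.
Qed.

Lemma mem_shw k l : j \in shw i j k l.
Proof. by rewrite /shw mem_cat inE eqxx orbT. Qed.

Lemma phi_Psi1 m u : shape m u -> phi (j :: nseq m i) u = Psi1 u * Gq (p i i) m.
Proof.
move=> hs; rewrite /phi /Psi1 big_distrl /=; apply: eq_big_seq => a /hs [k hk ->].
have -> : nseq m i = nseq (k + (m - k)) i by rewrite subnKC.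
by rewrite Kw_first // index_shw subnKC // mulrA.
Qed.

Lemma phi_Psi2 m u : shape m u -> phi (rcons (nseq m i) j) u = Psi2 u * Gq (p i i) m.
Proof.
move=> hs; rewrite /phi /Psi2 big_distrl /=; apply: eq_big_seq => a /hs [k hk ->].
have -> : nseq m i = nseq (k + (m - k)) i by rewrite subnKC.
by rewrite Kw_last // index_shw size_shw subnKC // mulrA subSS.
Qed.

Lemma phi_size m u y : shape m u -> size y != m.+1 -> phi y u = 0.
Proof.
move=> hs hy; rewrite /phi big1_seq // => a /andP[_ /hs [k hk ->]].
by rewrite Kf_size ?mulr0 // size_shw subnKC.
Qed.

Lemma Psi1_cat u v : Psi1 (u ++ v) = Psi1 u + Psi1 v.
Proof. by rewrite /Psi1 big_cat. Qed.
Lemma Psi2_cat u v : Psi2 (u ++ v) = Psi2 u + Psi2 v.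
Proof. by rewrite /Psi2 big_cat. Qed.
Lemma Psi1_scale c u : Psi1 (tscale c u) = c * Psi1 u.
Proof. by rewrite /Psi1 /tscale big_map mulr_sumr; apply: eq_bigr => a _; rewrite mulrA. Qed.
Lemma Psi2_scale c u : Psi2 (tscale c u) = c * Psi2 u.
Proof. by rewrite /Psi2 /tscale big_map mulr_sumr; apply: eq_bigr => a _; rewrite mulrA. Qed.

Lemma tmul_l u : tmul (tletter F i) u = [seq (1 * b.1, i :: b.2) | b <- u].
Proof. by rewrite /tmul /tletter /= cats0. Qed.
Lemma tmul_r u : tmul u (tletter F i) = [seq (b.1 * 1, b.2 ++ [:: i]) | b <- u].
Proof. by rewrite /tmul /tletter; elim: u => //= a u ->. Qed.

Lemma Psi1_l u : Psi1 (tmul (tletter F i) u) = p i j * Psi1 u.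
Proof.
rewrite tmul_l /Psi1 big_map mulr_sumr; apply: eq_bigr => a _ /=.
by rewrite (negbTE ij) exprS mul1r mulrCA.
Qed.
Lemma Psi2_l u : Psi2 (tmul (tletter F i) u) = Psi2 u.
Proof.
rewrite tmul_l /Psi2 big_map; apply: eq_bigr => a _ /=.
by rewrite (negbTE ij) mul1r subSS.
Qed.
Lemma Psi1_r m u : shape m u -> Psi1 (tmul u (tletter F i)) = Psi1 u.
Proof.
move=> hs; rewrite tmul_r /Psi1 big_map; apply: eq_big_seq => a /hs [k hk ->] /=.
by rewrite mulr1 index_cat mem_shw.
Qed.
Lemma Psi2_r m u : shape m u -> Psi2 (tmul u (tletter F i)) = p j i * Psi2 u.
Proof.
move=> hs; rewrite tmul_r /Psi2 big_map mulr_sumr; apply: eq_big_seq => a /hs [k hk ->] /=.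
rewrite mulr1 index_cat mem_shw size_cat /= index_shw size_shw.
rewrite mulrCA -exprS; congr (_ * (_ ^+ _)); lia.
Qed.

Lemma shape_step m u : shape m u -> forall A B,
  shape m.+1 (tscale A (tmul (tletter F i) u) ++ tscale B (tmul u (tletter F i))).
Proof.
move=> hs A B a; rewrite mem_cat => /orP[].
  rewrite /tscale tmul_l -map_comp => /mapP [b /hs [k hk e] ->] /=.
  by exists k.+1 => //; rewrite e subSS.
rewrite /tscale tmul_r -map_comp => /mapP [b /hs [k hk e] ->] /=.
exists k; first by apply: leqW.
rewrite e /shw -catA /=; congr (_ ++ _ :: _).
by rewrite -(nseqD _ 1) addn1 subSn.
Qed.


Lemma ev_generic (ev : btree n -> tens F n) (A B : nat -> F) :
  ev (tr 0) = tletter F j ->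
  (forall m, ev (tr m.+1) = tscale (A m) (tmul (tletter F i) (ev (tr m))) ++
                            tscale (B m) (tmul (ev (tr m)) (tletter F i))) ->
  (forall m, shape m (ev (tr m))) /\
  (forall m, Psi1 (ev (tr m)) = \prod_(k < m) (A k * p i j + B k)) /\
  (forall m, Psi2 (ev (tr m)) = \prod_(k < m) (A k + B k * p j i)).
Proof.
move=> h0 hS.
have hs : forall m, shape m (ev (tr m)).
  elim=> [|m IH]; last by rewrite hS; apply: shape_step.
  rewrite h0 => a; rewrite inE => /eqP -> /=; exists 0%N => //.
split=> //; split.
  elim=> [|m IH]; first by rewrite h0 big_ord0 /Psi1 big_seq1 /= eqxx mulr1.
  rewrite hS Psi1_cat !Psi1_scale Psi1_l (Psi1_r (hs m)) IH big_ord_recr /=.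
  by rewrite mulrA -mulrDl mulrC.
elim=> [|m IH]; first by rewrite h0 big_ord0 /Psi2 big_seq1 /= eqxx mulr1.
rewrite hS Psi2_cat !Psi2_scale Psi2_l (Psi2_r (hs m)) IH big_ord_recr /=.
by rewrite mulrA -mulrDl mulrC.
Qed.

Lemma indep (ev : btree n -> tens F n) (y : nat -> seq 'I_n) :
  (forall m, size (y m) = m.+1) -> (forall m, shape m (ev (tr m))) ->
  (forall m, phi (y m) (ev (tr m)) != 0) -> infinite_dim_span p ev.
Proof.
move=> hy hs hnz N; exists (mktuple (fun k : 'I_N => tr k)) => c hz k0.
have := hz (y k0); rewrite tcoef_sym /phi big_flatten big_map big_enum /=.
rewrite (eq_bigr (fun k => c k * phi (y k0) (ev (tr k)))); last first.
  by move=> k _; rewrite tnth_mktuple -phi_scale.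
rewrite (bigD1 k0) //= [X in _ + X]big1 ?addr0; last first.
  move=> k hk; rewrite (@phi_size k) ?mulr0 //.
  by rewrite hy eqSS; apply: contra hk => /eqP e; apply/eqP/val_inj.
move=> /eqP; rewrite mulf_eq0 (negbTE (hnz _)) orbF.
by move/eqP.
Qed.

End E.

Lemma Gq_neq0 (F : fieldType) (q : F) m : [pchar F] =i pred0 -> ord_1_or_inf q -> Gq q m != 0.
Proof.
move=> hc hq; rewrite /Gq; apply/prodf_neq0 => k _.
case: hq => [->|hq].
  rewrite (eq_bigr (fun _ => 1)) ?sumr_const ?card_ord; last by move=> r _; rewrite expr1n.
  by rewrite -[1 *+ _]/(_%:R) (pcharf0P _).1.
apply/eqP => h; apply: hq; exists k.+1; split => //.
by apply/eqP; rewrite -subr_eq0 subrX1 h mulr0.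
Qed.


Lemma part (F : fieldType) (n : nat) (p : 'I_n -> 'I_n -> F) (i j : 'I_n) (ij : i != j)
  (ev : btree n -> tens F n) (A B : nat -> F) :
  [pchar F] =i pred0 -> ord_1_or_inf (p i i) ->
  ev (tr i j 0) = tletter F j ->
  (forall m, ev (tr i j m.+1) = tscale (A m) (tmul (tletter F i) (ev (tr i j m))) ++
                            tscale (B m) (tmul (ev (tr i j m)) (tletter F i))) ->
  ((forall k, A k * p i j + B k != 0) \/ (forall k, A k + B k * p j i != 0)) ->
  infinite_dim_span p ev.
Proof.
move=> hc hq h0 hS hf.
have [hs [h1 h2]] := ev_generic p ij h0 hS.
case: hf => hf.
  apply: (@indep _ _ _ i j _ (fun m => j :: nseq m i)) => // m.
    by rewrite /= size_nseq.
  rewrite (phi_Psi1 p ij (hs m)) h1 mulf_neq0 ?Gq_neq0 //.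
  by apply/prodf_neq0 => k _.
apply: (@indep _ _ _ i j _ (fun m => rcons (nseq m i) j)) => // m.
  by rewrite size_rcons size_nseq.
rewrite (phi_Psi2 p ij (hs m)) h2 mulf_neq0 ?Gq_neq0 //.
by apply/prodf_neq0 => k _.
Qed.

Unset Implicit Arguments.

Theorem proposition6p8 (F : fieldType) (n : nat) (p : 'I_n -> 'I_n -> F) :
  [pchar F] =i pred0 ->
  (forall i j, p i j != 0) ->
  ((exists i j : 'I_n, i != j /\ (p i j != p j i ^+ 2 \/ p j i != p i j ^+ 2)
                        /\ ord_1_or_inf (p i i)) ->
     infinite_dim_span p (evalR p)) /\
  ((exists i j : 'I_n, i != j /\ (p i j != 1 \/ p j i != 1)
                        /\ ord_1_or_inf (p i i)) ->
     infinite_dim_span p (evalL p)).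
Proof.
move=> hc hp; split; move=> [i [j [ij [hcase hq]]]].
  apply: (@part _ _ p i j ij (evalR p)
     (fun m => bichar p (bdeg (BLeaf i)) (bdeg (tr i j m)))
     (fun m => - bichar p (bdeg (tr i j m)) (bdeg (BLeaf i)))) => //.
  case: hcase => h; [right | left] => k; rewrite bichar_l bichar_r.
    have -> : p i i ^+ k * p i j + - (p i i ^+ k * p j i) * p j i =
              p i i ^+ k * (p i j - p j i ^+ 2) by ring.
    by rewrite mulf_neq0 ?expf_neq0 // subr_eq0.
  have -> : p i i ^+ k * p i j * p i j + - (p i i ^+ k * p j i) =
            p i i ^+ k * (p i j ^+ 2 - p j i) by ring.
  by rewrite mulf_neq0 ?expf_neq0 // subr_eq0 eq_sym.
apply: (@part _ _ p i j ij (evalL p)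
   (fun m => bichar p (bdeg (tr i j m)) (bdeg (BLeaf i)))
   (fun m => - bichar p (bdeg (BLeaf i)) (bdeg (tr i j m)))) => //.
case: hcase => h; [right | left] => k; rewrite bichar_l bichar_r.
  have -> : p i i ^+ k * p j i + - (p i i ^+ k * p i j) * p j i =
            p i i ^+ k * p j i * (1 - p i j) by ring.
  by rewrite !mulf_neq0 ?expf_neq0 // subr_eq0 eq_sym.
have -> : p i i ^+ k * p j i * p i j + - (p i i ^+ k * p i j) =
          p i i ^+ k * p i j * (p j i - 1) by ring.
by rewrite !mulf_neq0 ?expf_neq0 // subr_eq0.
Qed.
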